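(* $\mathfrak{cp}((\mathcal{P}(\omega)/\mathrm{fin})^-)=\mathfrak{r}$.
   Context: $\mathcal{P}(\omega)/\mathrm{fin}$ is the Boolean algebra of subsets of $\omega$ modulo finite sets; for a Boolean algebra $B$, $B^-=B\setminus\{0,1\}$ ordered by the Boolean order. For a poset $(P,\le)$, $F\subseteq P$ is a comparable family if for every $p\in P$ there is $q\in F$ with $p\le q$ or $q\le p$; $\mathfrak{cp}(P)$ is the minimal size of a comparable family. $\mathfrak{r}$ is the reaping number: the minimal size of a family $\mathcal{R}\subseteq[\omega]^\omega$ such that no single $X\subseteq\omega$ splits every member of $\mathcal{R}$ (i.e., for every $X$ there is $R\in\mathcal{R}$ with $R\subseteq^* X$ or $R\subseteq^*\omega\setminus X$). *)

(* Defs.v *)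
From mathcomp Require Import all_boot.
From mathcomp Require Import boolp classical_sets functions cardinality.
Set Implicit Arguments. Unset Strict Implicit. Unset Printing Implicit Defensive.
Local Open Scope classical_set_scope.

Definition almost_sub (A B : set nat) : Prop := finite_set (A `\` B).
Definition almost_eq (A B : set nat) : Prop := almost_sub A B /\ almost_sub B A.

(* The elements of P(omega)/fin are equivalence classes [A] = {B | A =* B}. *)
Definition fin_class (A : set nat) : set (set nat) := [set B | almost_eq A B].

(* (P(omega)/fin)^- : classes other than 0 = [finite] and 1 = [cofinite],
   i.e. the classes of infinite, co-infinite sets. *)
Definition Pfin_minus : set (set (set nat)) :=
  [set C | exists A : set nat, [/\ infinite_set A, infinite_set (~` A) & C = fin_class A]].

(* Boolean order on P(omega)/fin: [A] <= [B] iff A \subseteq^* B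
   (independent of representatives). *)
Definition Pfin_le (C D : set (set nat)) : Prop :=
  exists A B, [/\ C A, D B & almost_sub A B].

Definition comparable_family T (P : set T) (le : T -> T -> Prop) (F : set T) : Prop :=
  F `<=` P /\ forall p, P p -> exists2 q, F q & (le p q \/ le q p).

(* Reaping (unsplit) family: R \subseteq [omega]^omega, and no X splits every member. *)
Definition reaping_family (R : set (set nat)) : Prop :=
  (forall Y, R Y -> infinite_set Y) /\
  forall X : set nat, exists2 Y, R Y & (almost_sub Y X \/ almost_sub Y (~` X)).

Definition min_card T (Q : set T -> Prop) (F : set T) : Prop :=
  Q F /\ forall G, Q G -> (F #<= G)%card.

(* Main.v *)
Require Import Defs.
From mathcomp Require Import all_boot.
From mathcomp Require Import boolp classical_sets functions cardinality.
From mathcomp Require Import wochoice.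
Set Implicit Arguments. Unset Strict Implicit. Unset Printing Implicit Defensive.
Local Open Scope classical_set_scope.
Local Open Scope card_scope.

Lemma card_le_fun T U (A : set T) (B : set U) (f : T -> U) :
  set_fun A B f -> set_inj A f -> A #<= B.
Proof.
move=> fAB fi.
have : $|{injfun A >-> B}| by apply/injfunPex; exists f.
by case=> F; exact: inj_card_le F.
Qed.

Lemma wo_min (U : eqType) (W : rel U) : well_order W ->
  forall (P : U -> Prop), (exists x, P x) -> exists z, P z /\ forall y, P y -> W z y.
Proof.
move=> wo P [x Px].
have [|z [[zP lb] _]] := wo [pred y | `[< P y >]].
  by exists x; rewrite inE.
exists z; split; first by move: zP; rewrite inE.
by move=> y Py; apply: lb; rewrite inE.
Qed.

Lemma wo_refl (U : eqType) (W : rel U) : well_order W -> forall x, W x x.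
Proof.
move=> wo x; have [z [Pz lb]] := wo_min wo (ex_intro (fun y => y = x) x erefl).
by subst z; exact: lb.
Qed.

Lemma wo_anti (U : eqType) (W : rel U) : well_order W -> forall x y, W x y -> W y x -> x = y.
Proof.
move=> wo x y xy yx.
have [|z [[_ lb] uniq]] := wo [pred t | (t == x) || (t == y)].
  by exists x; rewrite inE eqxx.
have hx := uniq x; have hy := uniq y.
rewrite -hx; first (rewrite -hy //); split.
- by rewrite inE eqxx orbT.
- by move=> t; rewrite inE => /orP[] /eqP ->; [|exact: wo_refl].
- by rewrite inE eqxx.
- by move=> t; rewrite inE => /orP[] /eqP ->; [exact: wo_refl|].
Qed.

Lemma union_chain_func (T U : Type) (F : set (set (T * U))) (Q : set (T*U) -> Prop) :
  F `<=` Q -> total_on F subset ->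
  (forall g, Q g -> forall x y y', g (x,y) -> g (x,y') -> y = y') ->
  forall x y y', (\bigcup_(X in F) X) (x,y) -> (\bigcup_(X in F) X) (x,y') -> y = y'.
Proof.
move=> FQ tot H x y y' [G1 FG1 g1] [G2 FG2 g2].
have [s12|s21] := tot _ _ FG1 FG2.
- exact: (H _ (FQ _ FG2) x y y' (s12 _ g1) g2).
- exact: (H _ (FQ _ FG1) x y y' g1 (s21 _ g2)).
Qed.

Lemma union_chain_inj (T U : Type) (F : set (set (T * U))) (Q : set (T*U) -> Prop) :
  F `<=` Q -> total_on F subset ->
  (forall g, Q g -> forall x x' y, g (x,y) -> g (x',y) -> x = x') ->
  forall x x' y, (\bigcup_(X in F) X) (x,y) -> (\bigcup_(X in F) X) (x',y) -> x = x'.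
Proof.
move=> FQ tot H x x' y [G1 FG1 g1] [G2 FG2 g2].
have [s12|s21] := tot _ _ FG1 FG2.
- exact: (H _ (FQ _ FG2) x x' y (s12 _ g1) g2).
- exact: (H _ (FQ _ FG1) x x' y g1 (s21 _ g2)).
Qed.

Definition initial (U : Type) (W : rel U) (I : set U) := forall x y, W x y -> I y -> I x.

Lemma seg_card (U : choiceType) (W : rel U) : well_order W -> forall S : set U,
  exists I : set U, initial W I /\ S #= I.
Proof.
move=> wo S.
pose P (g : set (U * U)) :=
  [/\ (forall x y, g (x,y) -> S x),
      (forall x y y', g (x,y) -> g (x,y') -> y = y'),
      (forall x x' y, g (x,y) -> g (x',y) -> x = x')
    & (forall u v, W u v -> (exists x, g (x,v)) -> exists x, g (x,u))].
have [g [[gS gf gi ginit] gmax]] : exists A, P A /\ forall B, A `<` B -> ~ P B.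
  apply: Zorn_bigcup => F FP tot; split.
  - move=> x y [G FG Gxy]; have [h _ _ _] := FP _ FG; exact: h Gxy.
  - by apply: (union_chain_func FP tot) => G [].
  - by apply: (union_chain_inj FP tot) => G [].
  - move=> u v Wuv [x [G FG Gxv]]; have [_ _ _ h] := FP _ FG.
    have [x' Gx'u] := h u v Wuv (ex_intro _ x Gxv).
    by exists x'; exists G.
pose D := [set x | exists y, g (x,y)].
pose E := [set y | exists x, g (x,y)].
have Einit : initial W E by move=> u v Wuv Ev; apply: ginit Wuv Ev.
pose f x := xget x (fun y => g (x,y)).
pose h y := xget y (fun x => g (x,y)).
have fP x : D x -> g (x, f x) by move=> Dx; exact: (@xgetPex _ x (fun y => g (x,y)) Dx).
have hP y : E y -> g (h y, y) by move=> Ey; exact: (@xgetPex _ y (fun x => g (x,y)) Ey).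
have ES : E #<= S.
  apply: (@card_le_fun _ _ _ _ h).
    by move=> y Ey; apply: (gS _ y); apply: hP.
  by move=> y y' /set_mem Ey /set_mem Ey' hyy'; apply: (gf (h y)); [apply: hP|rewrite hyy'; apply: hP].
have [SD|/existsNP[s /not_implyP[Ss nDs]]] := pselect (S `<=` D).
  exists E; split => //; apply/card_eqPle; split => //.
  apply: (@card_le_fun _ _ _ _ f).
    by move=> x Sx; exists x; apply: fP; apply: SD.
  move=> x x' /set_mem Sx /set_mem Sx' fxx'; apply: (gi x x' (f x)); first by apply: fP; apply: SD.
  by rewrite fxx'; apply: fP; apply: SD.
have [ET|/existsNP[u0 nEu0]] := pselect (forall y, E y).
  exists setT; split; first by [].
  apply/card_eqPle; split; first exact: card_leT.
  apply: card_le_trans ES; apply: subset_card_le => y _; exact: ET.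
have [u [nEu umin]] := wo_min wo (ex_intro (fun y => ~ E y) u0 nEu0).
exfalso; apply: (gmax (g `|` [set (s,u)])).
  split; first by move=> -[x y] gxy; left.
  move=> /(_ (s,u) (or_intror erefl)) gsu; apply: nDs; by exists u.
split.
- by move=> x y [/gS //|[-> _]].
- move=> x y y' [gxy|[ex ey]] [gxy'|[ex' ey']].
  + exact: gf gxy gxy'.
  + by exfalso; apply: nDs; exists y; rewrite -ex'.
  + by exfalso; apply: nDs; exists y'; rewrite -ex.
  + by rewrite ey ey'.
- move=> x x' y [gxy|[ex ey]] [gx'y|[ex' ey']].
  + exact: gi gxy gx'y.
  + by exfalso; apply: nEu; exists x; rewrite -ey'.
  + by exfalso; apply: nEu; exists x'; rewrite -ey.
  + by rewrite ex ex'.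
- move=> a b Wab [x [gxb|[ex eb]]].
    by have [x' gx'a] := ginit a b Wab (ex_intro _ x gxb); exists x'; left.
  have [Ea|nEa] := pselect (E a); first by case: Ea => x' gx'a; exists x'; left.
  have ua := umin a nEa; subst b.
  have -> := wo_anti wo Wab ua; by exists s; right.
Qed.

Lemma min_exists (U : choiceType) (Q : set U -> Prop) :
  (exists S, Q S) -> exists S, Q S /\ forall G, Q G -> S #<= G.
Proof.
move=> [S1 QS1].
have [W wo] := well_ordering_principle U.
pose Th I := initial W I /\ exists S, Q S /\ S #= I.
have ThG G : Q G -> exists J, Th J /\ G #= J.
  move=> QG; have [J [iJ GJ]] := seg_card wo G.
  by exists J; split => //; split => //; exists G.
have key : exists I0, Th I0 /\ forall J, Th J -> I0 `<=` J.
  have [[m Nm]|nN] := pselect (exists m, exists I, Th I /\ ~ I m).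
    have [m0 [[I0 [ThI0 nI0]] m0min]] := @wo_min _ _ wo (fun m => exists I, Th I /\ ~ I m) (ex_intro _ m Nm).
    exists I0; split => // J ThJ x I0x.
    apply: contrapT => nJx.
    have Wm0x := m0min x (ex_intro _ J (conj ThJ nJx)).
    by apply: nI0; case: ThI0 => iI0 _; exact: iI0 Wm0x I0x.
  have [I0 [ThI0 _]] := ThG _ QS1.
  exists I0; split => // J ThJ x _.
  apply: contrapT => nJx; apply: nN; by exists x, J.
have [I0 [[iI0 [S0 [QS0 S0I0]]] I0min]] := key.
exists S0; split => // G QG.
have [J [ThJ GJ]] := ThG _ QG.
apply: card_le_trans (_ : I0 #<= G).
  by move: S0I0; rewrite card_eq_le => /andP[].
apply: card_le_trans (_ : J #<= G).
  exact: subset_card_le (I0min _ ThJ).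
by move: GJ; rewrite card_eq_le => /andP[].
Qed.
Lemma nat_inj_of_infinite (T : Type) (S : set T) : infinite_set S ->
  exists e : nat -> T, (forall n, S (e n)) /\ injective e.
Proof.
move=> /infiniteP /card_leP [F].
exists (fun n => val (F (to_setT n))); split; first by move=> n; exact: set_valP.
move=> m n /val_inj Fmn.
have := 'inj_F; move=> /(_ (to_setT m) (to_setT n)).
rewrite !inE => /(_ I I Fmn) H.
by have := congr1 val H.
Qed.

Lemma double_le (T : choiceType) (A : set T) : infinite_set A -> A `*` [set: bool] #<= A.
Proof.
move=> Ainf.
pose P (g : set ((T * bool) * T)) :=
  [/\ (forall x b y, g ((x,b),y) -> A x),
      (forall x b y b', g ((x,b),y) -> exists y', g ((x,b'),y')),
      (forall p y y', g (p,y) -> g (p,y') -> y = y'),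
      (forall p p' y, g (p,y) -> g (p',y) -> p = p')
    & (forall p y, g (p,y) -> exists y', g ((y,true),y'))].
have [g [[gA gflip gf gi gran] gmax]] : exists G, P G /\ forall B, G `<` B -> ~ P B.
  apply: Zorn_bigcup => F FP tot; split.
  - move=> x b y [G FG Gxy]; have [h _ _ _ _] := FP _ FG; exact: h Gxy.
  - move=> x b y b' [G FG Gxy]; have [_ h _ _ _] := FP _ FG.
    by have [y' Gy'] := h _ _ _ b' Gxy; exists y'; exists G.
  - by apply: (union_chain_func FP tot) => G [].
  - by apply: (union_chain_inj FP tot) => G [].
  - move=> p y [G FG Gpy]; have [_ _ _ _ h] := FP _ FG.
    by have [y' Gy'] := h _ _ Gpy; exists y'; exists G.
pose X := [set x | exists y, g ((x,true),y)].
have XA : X `<=` A by move=> x [y gxy]; exact: gA gxy.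
have Lfin : finite_set (A `\` X).
  apply: contrapT => Linf.
  have [e [eL einj]] := nat_inj_of_infinite Linf.
  pose N := [set z : (T * bool) * T | exists n (b : bool), z = ((e n, b), e (n.*2 + b)%N)].
  have nX n : ~ X (e n) by case: (eL n).
  have domX x b y : g ((x,b),y) -> X x.
    by move=> gxy; have [y' h] := gflip _ _ _ true gxy; exists y'.
  have e2 n b m b' : (n.*2 + nat_of_bool b = m.*2 + nat_of_bool b')%N -> n = m /\ b = b'.
    move=> H; have Hb : b = b'.
      by move: (congr1 odd H); rewrite !oddD !odd_double /= !oddb.
    by subst b'; split => //; move/addIn: H => /(congr1 half); rewrite !doubleK.
  apply: (gmax (g `|` N)).
    split; first by move=> z gz; left.
    move=> /(_ ((e 0, true), e 1%N)) H; apply: (nX 0%N).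
    have gz : g ((e 0%N, true), e 1%N) by apply: H; right; exists 0%N, true.
    by apply: domX gz.
  split.
  - move=> x b y [/gA //|[n [b' [-> _ _]]]]; by case: (eL n).
  - move=> x b y b' [gxy|[n [b0 [ex _ _]]]].
      by have [y' h] := gflip _ _ _ b' gxy; exists y'; left.
    by exists (e (n.*2 + b')%N); right; exists n, b'; rewrite ex.
  - move=> p y y' [gpy|[n [b [ep ey]]]] [gpy'|[n' [b' [ep' ey']]]].
    + exact: gf gpy gpy'.
    + by exfalso; apply: (nX n'); rewrite ep' in gpy; apply: domX gpy.
    + by exfalso; apply: (nX n); rewrite ep in gpy'; apply: domX gpy'.
    + rewrite ep in ep'; case: ep' => /einj en eb; by rewrite ey ey' en eb.
  - move=> p p' y [gpy|[n [b [ep ey]]]] [gp'y|[n' [b' [ep' ey']]]].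
    + exact: gi gpy gp'y.
    + exfalso; apply: (nX (n'.*2 + b')%N); rewrite -ey'.
      by have := gran _ _ gpy; case=> y0 h; exists y0.
    + exfalso; apply: (nX (n.*2 + b)%N); rewrite -ey.
      by have := gran _ _ gp'y; case=> y0 h; exists y0.
    + rewrite ep ep'; rewrite ey in ey'; have [-> ->] := e2 _ _ _ _ (einj _ _ ey').
      by [].
  - move=> p y [gpy|[n [b [ep ey]]]].
      by have [y' h] := gran _ _ gpy; exists y'; left.
    by exists (e ((n.*2 + b).*2 + true)%N); right; exists (n.*2 + b)%N, true; rewrite ey.
have Xinf : infinite_set X.
  move=> Xfin; apply: Ainf; apply: (@sub_finite_set _ _ (X `|` (A `\` X))).
    by move=> x Ax; have [Xx|nXx] := pselect (X x); [left|right].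
  by rewrite finite_setU; split.
have [e [eX einj]] := nat_inj_of_infinite Xinf.
have [c cinj] : exists c : T * bool -> nat, {in (A `\` X) `*` [set: bool] &, injective c}.
  apply/pcard_injP; apply: finite_set_countable; apply: finite_setX => //.
pose gx p := xget (e 0%N) (fun y => g (p,y)).
have gdom x b : X x -> g ((x,b), gx (x,b)).
  move=> [y gxy]; have [y' h] := gflip _ _ _ b gxy.
  exact: (@xgetPex _ (e 0%N) (fun y => g ((x,b),y)) (ex_intro _ y' h)).
have granX p y : g (p,y) -> X y by move=> gpy; have [y' h] := gran _ _ gpy; exists y'.
pose h (z : T * bool) := if `[< X z.1 >] then gx (gx z, true) else gx (e (c z), false).
apply: (@card_le_fun _ _ _ _ h).
  move=> [a b] [/= Aa _]; rewrite /h /=; case: ifPn => [/asboolP Xa|_].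
    by apply: XA; apply: (granX (gx (a,b), true)); apply: (gdom); apply: (granX (a,b)); exact: (gdom).
  by apply: XA; apply: (granX (e (c (a,b)), false)); exact: (gdom).
move=> [a b] [a' b'] /set_mem [/= Aa _] /set_mem [/= Aa' _]; rewrite /h /=.
case: ifPn => [/asboolP Xa|/asboolP nXa]; case: ifPn => [/asboolP Xa'|/asboolP nXa'].
- have g1 := gdom _ true (granX _ _ (gdom _ b Xa)).
  have g2 := gdom _ true (granX _ _ (gdom _ b' Xa')).
  move=> E; rewrite E in g1; case: (gi _ _ _ g1 g2) => E2.
  have g3 := gdom _ b Xa; have g4 := gdom _ b' Xa'.
  by rewrite E2 in g3; exact: gi g3 g4.
- have g1 := gdom _ true (granX _ _ (gdom _ b Xa)).
  have g2 := gdom _ false (eX (c (a',b'))).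
  by move=> E; rewrite E in g1; case: (gi _ _ _ g1 g2).
- have g1 := gdom _ false (eX (c (a,b))).
  have g2 := gdom _ true (granX _ _ (gdom _ b' Xa')).
  by move=> E; rewrite E in g1; case: (gi _ _ _ g1 g2).
- have g1 := gdom _ false (eX (c (a,b))).
  have g2 := gdom _ false (eX (c (a',b'))).
  move=> E; rewrite E in g1; case: (gi _ _ _ g1 g2) => /einj E2.
  by apply: cinj E2; rewrite inE; split.
Qed.
Lemma as_trans A B C : almost_sub A B -> almost_sub B C -> almost_sub A C.
Proof.
rewrite /almost_sub => AB BC; apply: (@sub_finite_set _ _ ((A `\` B) `|` (B `\` C))).
  by move=> x [Ax nCx]; have [Bx|nBx] := pselect (B x); [right|left].
by rewrite finite_setU.
Qed.

Lemma as_sub (A B : set nat) : A `<=` B -> almost_sub A B.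
Proof.
move=> AB; apply: (@sub_finite_set _ _ set0); last exact: finite_set0.
by move=> x [/AB].
Qed.

Lemma as_refl A : almost_sub A A. Proof. exact: as_sub. Qed.

Lemma as_compl A B : almost_sub A B -> almost_sub (~` B) (~` A).
Proof.
rewrite /almost_sub => AB; apply: sub_finite_set AB.
by move=> x [/= nBx nnAx]; split => //; apply: contrapT.
Qed.

Lemma as_fin (X Y : set nat) : finite_set X -> almost_sub Y (~` X).
Proof. by move=> Xf; apply: sub_finite_set Xf => x [_ /contrapT]. Qed.

Lemma as_cofin (X Y : set nat) : finite_set (~` X) -> almost_sub Y X.
Proof. by move=> Xf; apply: sub_finite_set Xf => x []. Qed.

Lemma Pfin_leE A B : Pfin_le (fin_class A) (fin_class B) <-> almost_sub A B.
Proof.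
split.
  move=> [A' [B' [[AA' _] [_ B'B] A'B']]].
  exact: as_trans AA' (as_trans A'B' B'B).
by move=> AB; exists A, B; split => //; split; exact: as_refl.
Qed.

Lemma nat_infinite_compl (X : set nat) : finite_set X -> infinite_set (~` X).
Proof.
move=> Xf nXf; apply: infinite_nat.
apply: (@sub_finite_set _ _ (X `|` ~` X)); last by rewrite finite_setU.
by move=> x _; have [Xx|nXx] := pselect (X x); [left|right].
Qed.

Lemma infinite_gt (Y : set nat) m : infinite_set Y -> exists y, Y y /\ (m < y)%N.
Proof.
move=> Yinf; apply: contrapT => H; apply: Yinf.
apply: (@sub_finite_set _ _ `I_m.+1); last exact: finite_II.
move=> y Yy; rewrite /= ltnS; rewrite leqNgt; apply/negP => my; apply: H; by exists y.
Qed.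
Lemma split_inf (Y : set nat) : infinite_set Y ->
  exists Z, [/\ Z `<=` Y, infinite_set Z & infinite_set (~` Z)].
Proof.
move=> /nat_inj_of_infinite [e [eY einj]].
exists [set e (n.*2) | n in [set: nat]]; split.
- by move=> _ [n _ <-].
- apply/infiniteP; apply: (@card_le_fun _ _ _ _ (fun n => e n.*2)).
    by move=> n _; exists n.
  by move=> m n _ _ /einj /(congr1 half); rewrite !doubleK.
- apply/infiniteP; apply: (@card_le_fun _ _ _ _ (fun n => e n.*2.+1)).
    move=> n _ [m _ /einj E]; move: (congr1 odd E).
    by rewrite /= !odd_double.
  by move=> m n _ _ /einj [] /(congr1 half); rewrite !doubleK.
Qed.

Lemma reap_infinite R : reaping_family R -> infinite_set R.
Proof.
move=> [Rinf Rreap] /finite_fsetP [S RS].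
pose s : seq (set nat) := finmap.enum_fset S.
pose n := size s.
pose Y i := nth set0 s i.
have memR Z : R Z -> exists2 i, (i < n)%N & Z = Y i.
  rewrite RS /= => ZS; exists (index Z s); first by rewrite index_mem.
  by rewrite /Y nth_index.
have YR i : (i < n)%N -> R (Y i) by move=> ilt; rewrite RS /=; exact: mem_nth.
have n0 : (0 < n)%N.
  have [Z RZ _] := Rreap set0; have [i ilt _] := memR Z RZ.
  exact: leq_ltn_trans ilt.
have Yinf i : infinite_set (Y (i %% n)).
  by apply: Rinf; apply: YR; rewrite ltn_mod.
pose nxt (Z : set nat) m := xget 0%N (fun y => Z y /\ (m < y)%N).
have nxtP Z m : infinite_set Z -> Z (nxt Z m) /\ (m < nxt Z m)%N.
  move=> Zinf; exact: (@xgetPex _ 0%N (fun y => Z y /\ (m < y)%N) (infinite_gt m Zinf)).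
pose x := fix f (k : nat) : nat := if k is k'.+1 then nxt (Y (k %% n)) (f k') else nxt (Y 0%N) 0%N.
have xY k : Y (k %% n) (x k).
  case: k => [|k]; last exact: (nxtP _ _ (Yinf k.+1)).1.
  by rewrite mod0n; have := (nxtP _ 0%N (Yinf 0%N)).1; rewrite mod0n.
have xS k : (x k < x k.+1)%N by exact: (nxtP _ _ (Yinf k.+1)).2.
have xmono : {homo x : i j / (i < j)%N >-> (i < j)%N}.
  by apply: homo_ltn => //; exact: ltn_trans.
have xinj : injective x.
  move=> i j; case: (ltngtP i j) => // [/xmono|/xmono] h E; by rewrite E ltnn in h.
pose X := [set m | exists k, m = x k /\ ~~ odd (k %/ n)].
have [Z RZ] := Rreap X.
have [i ilt ->] := memR Z RZ.
have idx j (b : bool) : ((j.*2 + b) * n + i) %% n = i /\ ((j.*2 + b) * n + i) %/ n = (j.*2 + b)%N.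
  split; first by rewrite modnMDl modn_small.
  by rewrite divnMDl // divn_small // addn0.
have inX j : X (x ((j.*2 + false) * n + i)).
  exists ((j.*2 + false) * n + i)%N; split => //.
  by rewrite (idx j false).2 addn0 odd_double.
have ninX j : ~ X (x ((j.*2 + true) * n + i)).
  move=> [k [/xinj E]]; rewrite -E (idx j true).2.
  by rewrite addn1 /= odd_double.
have inY j (b : bool) : Y i (x ((j.*2 + b) * n + i)).
  by have := xY ((j.*2 + b) * n + i)%N; rewrite (idx j b).1.
have injj (b : bool) : injective (fun j => x ((j.*2 + b) * n + i)).
  move=> j j' /xinj /addIn /eqP; rewrite eqn_mul2r eqn_add2r.
  rewrite (gtn_eqF n0) /= => /eqP /(congr1 half); by rewrite !doubleK.
case=> H.
- suff Hi : infinite_set (Y i `\` X) by exact: Hi H.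
  apply/infiniteP; apply: (@card_le_fun _ _ _ _ (fun j => x ((j.*2 + true) * n + i))).
    by move=> j _; split; [exact: inY|exact: ninX].
  by move=> j j' _ _ /injj.
- suff Hi : infinite_set (Y i `\` ~` X) by exact: Hi H.
  apply/infiniteP; apply: (@card_le_fun _ _ _ _ (fun j => x ((j.*2 + false) * n + i))).
    by move=> j _; split; [exact: inY|move=> /(_ (inX j))].
  by move=> j j' _ _ /injj.
Qed.

Theorem mainTheorem6 :
  exists (F : set (set (set nat))) (R : set (set nat)),
    [/\ min_card (comparable_family Pfin_minus Pfin_le) F,
        min_card reaping_family R
      & (F #= R)%card].
Proof.
have [R [[Rinf Rreap] Rmin]] : exists R, reaping_family R /\ forall G, reaping_family G -> R #<= G.
  apply: min_exists; exists [set Y | infinite_set Y]; split => // X.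
  have [Xf|Xi] := pselect (finite_set X).
    by exists (~` X); [exact: nat_infinite_compl|right; exact: as_refl].
  by exists X => //; left; exact: as_refl.
have [F [[FP Fcomp] Fmin]] : exists F, comparable_family Pfin_minus Pfin_le F /\
    forall G, comparable_family Pfin_minus Pfin_le G -> F #<= G.
  apply: min_exists; exists Pfin_minus; split => // p Pp; exists p => //; left.
  by case: Pp => A [_ _ ->]; apply/Pfin_leE; exact: as_refl.
exists F, R; split; [by split => //; split|by split => //; split|].
have [q0 Fq0] : exists q, F q.
  have [Z [_ Zi Zci]] := split_inf infinite_nat.
  have [q Fq _] := Fcomp (fin_class Z) (ex_intro _ Z (And3 Zi Zci erefl)).
  by exists q.
apply/card_eqPle; split.
- pose y0 (Y : set nat) : set nat := xget set0 (fun Z : set nat => [/\ Z `<=` Y, infinite_set Z & infinite_set (~` Z)]).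
  have y0P (Y : set nat) : infinite_set Y -> [/\ y0 Y `<=` Y, infinite_set (y0 Y) & infinite_set (~` y0 Y)].
    move=> Yi; exact: (@xgetPex _ set0 (fun Z => [/\ Z `<=` Y, infinite_set Z & infinite_set (~` Z)]) (split_inf Yi)).
  pose k (z : set nat * bool) := fin_class (if z.2 then y0 z.1 else ~` y0 z.1).
  have F'C : comparable_family Pfin_minus Pfin_le (k @` (R `*` [set: bool])).
    split.
    - move=> _ [[Y b] [/= RY _] <-]; have [_ Zi Zci] := y0P Y (Rinf Y RY).
      rewrite /k /=; case: b.
        by exists (y0 Y).
      by exists (~` y0 Y); split => //; rewrite setCK.
    - move=> p [A [Ai Aci ->]]; have [Y RY [h|h]] := Rreap A.
      + exists (k (Y,true)); first by exists (Y,true).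
        right; rewrite /k /= Pfin_leE; apply: as_trans h.
        by apply: as_sub; case: (y0P Y (Rinf Y RY)).
      + exists (k (Y,false)); first by exists (Y,false).
        left; rewrite /k /= Pfin_leE; have := as_compl h; rewrite setCK => h'.
        apply: as_trans h' _; apply: as_sub; case: (y0P Y (Rinf Y RY)) => sub _ _.
        by move=> x nYx y0x; apply: nYx; exact: sub.
  apply: card_le_trans (Fmin _ F'C) _.
  apply: card_le_trans (card_image_le k (R `*` [set: bool])) _.
  apply: double_le; exact: reap_infinite.
- pose rep (C : set (set nat)) : set nat := xget set0 (fun A : set nat => [/\ infinite_set A, infinite_set (~` A) & C = fin_class A]).
  have repP (C : set (set nat)) : Pfin_minus C -> [/\ infinite_set (rep C), infinite_set (~` rep C) & C = fin_class (rep C)].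
    move=> PC; exact: (@xgetPex _ set0 (fun A => [/\ infinite_set A, infinite_set (~` A) & C = fin_class A]) PC).
  pose k' (z : set (set nat) * bool) := if z.2 then rep z.1 else ~` rep z.1.
  have R'R : reaping_family (k' @` (F `*` [set: bool])).
    split.
    - move=> _ [[C b] [/= FC _] <-]; have [Ai Aci _] := repP C (FP C FC).
      by rewrite /k'; case: b.
    - move=> X.
      have [Xf|Xi] := pselect (finite_set X).
        by exists (k' (q0,true)); [exists (q0,true)|right; exact: as_fin].
      have [Xcf|Xci] := pselect (finite_set (~` X)).
        by exists (k' (q0,true)); [exists (q0,true)|left; exact: as_cofin].
      have [q Fq [h|h]] := Fcomp (fin_class X) (ex_intro _ X (And3 Xi Xci erefl)).
      + have [_ _ eq] := repP q (FP q Fq); rewrite eq Pfin_leE in h.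
        by exists (k' (q,false)); [exists (q,false)|right; exact: as_compl].
      + have [_ _ eq] := repP q (FP q Fq); rewrite eq Pfin_leE in h.
        by exists (k' (q,true)); [exists (q,true)|left].
  have Finf : infinite_set F.
    move=> Ffin; apply: (reap_infinite R'R); apply: finite_image.
    by apply: finite_setX => //; exact: finite_finset.
  apply: card_le_trans (Rmin _ R'R) _.
  apply: card_le_trans (card_image_le k' (F `*` [set: bool])) _.
  exact: double_le.
Qed.
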